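(* Let $G$ be a finitely presented residually finite group and $g_1,\ldots,g_m$ non-trivial elements of $G$. For $k\in\mathbb{N}$ let $H_k$ be the normal subgroup of $G$ generated by $g_1^k,\ldots,g_m^k$. If $rdef(G)>1$, then $rdef(G/H_k)>1$ for infinitely many natural numbers $k$.
   Context: Residual deficiency: for a finitely presented group $K$ and a finite presentation $Q=\langle X\mid R\rangle$ of $K$ with $X$ freely generating $F_n$ and $\varphi:F_n\to K$ canonical, write $R=\{u_1^{m_1},\ldots,u_s^{m_s}\}$ with $u_i$ not proper powers in $F_n$; let $R_K$ be the intersection of all finite index subgroups of $K$ and $k_i$ the order of $\varphi(u_i)R_K$ in $K/R_K$; $rdef(Q)=n-\sum 1/k_i$, and $rdef(K)$ is the supremum of $rdef(Q)$ over all finite presentations of $K$. *)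

(* Defs.v *)
From Stdlib Require Import Reals List Arith Lia Setoid Morphisms ClassicalEpsilon.
From Coquelicot Require Import Rbar Lub.
Import ListNotations.
Open Scope R_scope.

Record Group := mkGroup {
  carrier :> Type;
  geq : carrier -> carrier -> Prop;
  gop : carrier -> carrier -> carrier;
  gid : carrier;
  ginv : carrier -> carrier;
  geq_refl : forall x, geq x x;
  geq_sym : forall x y, geq x y -> geq y x;
  geq_trans : forall x y z, geq x y -> geq y z -> geq x z;
  gop_compat : forall x x' y y', geq x x' -> geq y y' -> geq (gop x y) (gop x' y');
  ginv_compat : forall x x', geq x x' -> geq (ginv x) (ginv x');
  gop_assoc : forall x y z, geq (gop x (gop y z)) (gop (gop x y) z);
  gop_id_l : forall x, geq (gop gid x) x;
  gop_id_r : forall x, geq (gop x gid) x;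
  gop_inv_l : forall x, geq (gop (ginv x) x) gid;
  gop_inv_r : forall x, geq (gop x (ginv x)) gid }.

Arguments geq {G} : rename.
Arguments gop {G} : rename.
Arguments ginv {G} : rename.
Arguments gid G : rename.

Fixpoint gpow {G : Group} (g : G) (k : nat) : G :=
  match k with O => gid G | S k' => gop g (gpow g k') end.

Definition subgroup (G : Group) (H : G -> Prop) : Prop :=
  (forall x y, geq x y -> H x -> H y) /\ H (gid G) /\
  (forall x y, H x -> H y -> H (gop x y)) /\ (forall x, H x -> H (ginv x)).

Definition normal_subgroup (G : Group) (N : G -> Prop) : Prop :=
  subgroup G N /\ forall g x, N x -> N (gop (gop g x) (ginv g)).

(* H has finitely many left cosets c H *)
Definition finite_index (G : Group) (H : G -> Prop) : Prop :=
  subgroup G H /\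
  exists cs : list G, forall g : G, exists c, In c cs /\ H (gop (ginv c) g).

Definition residually_finite (G : Group) : Prop :=
  forall g : G, ~ geq g (gid G) -> exists H, finite_index G H /\ ~ H g.

Definition ncl (G : Group) (S : G -> Prop) (g : G) : Prop :=
  forall N, normal_subgroup G N -> (forall s, S s -> N s) -> N g.

Lemma ncl_normal (G : Group) (S : G -> Prop) : normal_subgroup G (ncl G S).
Proof.
  unfold ncl; split; [split; [|split; [|split]]|].
  - intros x y Hxy Hx N HN HS. pose proof HN as [[Hr _] _]. exact (Hr _ _ Hxy (Hx N HN HS)).
  - intros N HN HS. destruct HN as [[_ [H1 _]] _]. exact H1.
  - intros x y Hx Hy N HN HS. pose proof HN as [[_ [_ [Hm _]]] _]. exact (Hm _ _ (Hx N HN HS) (Hy N HN HS)).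
  - intros x Hx N HN HS. pose proof HN as [[_ [_ [_ Hi]]] _]. exact (Hi _ (Hx N HN HS)).
  - intros g0 x0 Hx N HN HS. pose proof HN as [_ Hc]. exact (Hc _ _ (Hx N HN HS)).
Qed.

Add Parametric Relation (G : Group) : (carrier G) (@geq G)
  reflexivity proved by (@geq_refl G)
  symmetry proved by (@geq_sym G)
  transitivity proved by (@geq_trans G) as geq_rel.

Add Parametric Morphism (G : Group) : (@gop G)
  with signature (@geq G) ==> (@geq G) ==> (@geq G) as gop_mor.
Proof. intros; apply gop_compat; auto. Qed.

Add Parametric Morphism (G : Group) : (@ginv G)
  with signature (@geq G) ==> (@geq G) as ginv_mor.
Proof. intros; apply ginv_compat; auto. Qed.

Section GroupLemmas.
Variable G : Group.
Implicit Types x y z : G.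

Lemma assocR x y z : geq (gop (gop x y) z) (gop x (gop y z)).
Proof. symmetry; apply gop_assoc. Qed.

Lemma inv_unique x y : geq (gop x y) (gid G) -> geq y (ginv x).
Proof.
  intro H.
  rewrite <- (gop_id_l G y), <- (gop_inv_l G x), assocR, H, gop_id_r. reflexivity.
Qed.

Lemma inv_inv x : geq (ginv (ginv x)) x.
Proof. symmetry; apply inv_unique, gop_inv_l. Qed.

Lemma inv_op x y : geq (ginv (gop x y)) (gop (ginv y) (ginv x)).
Proof.
  symmetry; apply inv_unique.
  rewrite assocR, <- (assocR y), gop_inv_r, gop_id_l, gop_inv_r. reflexivity.
Qed.

Lemma inv_id : geq (ginv (gid G)) (gid G).
Proof. symmetry; apply inv_unique, gop_id_l. Qed.

Lemma cancel1 x z : geq (gop (ginv x) (gop x z)) z.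
Proof. rewrite gop_assoc, gop_inv_l, gop_id_l; reflexivity. Qed.

Lemma cancel2 x z : geq (gop x (gop (ginv x) z)) z.
Proof. rewrite gop_assoc, gop_inv_r, gop_id_l; reflexivity. Qed.
End GroupLemmas.

Ltac gsimpl :=
  repeat (first [ setoid_rewrite assocR | setoid_rewrite inv_op
                | setoid_rewrite inv_inv | setoid_rewrite inv_id
                | setoid_rewrite cancel1 | setoid_rewrite cancel2
                | setoid_rewrite gop_inv_l | setoid_rewrite gop_inv_r
                | setoid_rewrite gop_id_l | setoid_rewrite gop_id_r ]).

Section Quotient.
Variables (G : Group) (N : G -> Prop) (HN : normal_subgroup G N).

Definition qeq (x y : G) : Prop := N (gop (ginv x) y).

Lemma N_resp x y : geq x y -> N x -> N y.
Proof. destruct HN as [[H _] _]; exact (H x y). Qed.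
Lemma N_id : N (gid G).
Proof. destruct HN as [[_ [H _]] _]; exact H. Qed.
Lemma N_op x y : N x -> N y -> N (gop x y).
Proof. destruct HN as [[_ [_ [H _]]] _]; exact (H x y). Qed.
Lemma N_inv x : N x -> N (ginv x).
Proof. destruct HN as [[_ [_ [_ H]]] _]; exact (H x). Qed.
Lemma N_conj g x : N x -> N (gop (gop g x) (ginv g)).
Proof. destruct HN as [_ H]; exact (H g x). Qed.

Lemma geq_qeq x y : geq x y -> qeq x y.
Proof. intro H; unfold qeq; apply (N_resp (gid G)); [rewrite H; symmetry; apply gop_inv_l | apply N_id]. Qed.

Lemma qeq_refl x : qeq x x.
Proof. apply geq_qeq; reflexivity. Qed.

Lemma qeq_sym x y : qeq x y -> qeq y x.
Proof.
  unfold qeq; intro H. apply N_inv in H. apply (N_resp _ _ (inv_op G _ _)) in H.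
  apply (N_resp _ _ (gop_compat G _ _ _ _ (geq_refl G _) (inv_inv G x))) in H. exact H.
Qed.

Lemma qeq_trans x y z : qeq x y -> qeq y z -> qeq x z.
Proof.
  unfold qeq; intros H1 H2. eapply N_resp; [|exact (N_op _ _ H1 H2)]; gsimpl; reflexivity.
Qed.

Lemma qop_compat x x' y y' : qeq x x' -> qeq y y' -> qeq (gop x y) (gop x' y').
Proof.
  unfold qeq; intros H1 H2.
  pose proof (N_op _ _ (N_conj (ginv y) _ H1) H2) as H.
  eapply N_resp; [|exact H]; gsimpl; reflexivity.
Qed.

Lemma qinv_compat x x' : qeq x x' -> qeq (ginv x) (ginv x').
Proof.
  unfold qeq; intro H1.
  pose proof (N_conj x _ (N_inv _ H1)) as H.
  eapply N_resp; [|exact H]; gsimpl; reflexivity.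
Qed.

Definition quotient : Group :=
  @mkGroup (carrier G) qeq (@gop G) (gid G) (@ginv G)
    qeq_refl qeq_sym qeq_trans qop_compat qinv_compat
    (fun x y z => geq_qeq _ _ (gop_assoc G x y z))
    (fun x => geq_qeq _ _ (gop_id_l G x))
    (fun x => geq_qeq _ _ (gop_id_r G x))
    (fun x => geq_qeq _ _ (gop_inv_l G x))
    (fun x => geq_qeq _ _ (gop_inv_r G x)).
End Quotient.

Definition Hk (G : Group) (gs : list G) (k : nat) : G -> Prop :=
  ncl G (fun s => exists g, In g gs /\ s = gpow g k).

Definition Hk_normal (G : Group) (gs : list G) (k : nat) : normal_subgroup G (Hk G gs k) :=
  ncl_normal G _.

(* Free groups: words over letters (i, true) = x_i, (i, false) = x_i^-1 *)
Definition letter := (nat * bool)%type.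
Definition word := list letter.
Definition wordn (n : nat) (w : word) : Prop := Forall (fun a => (fst a < n)%nat) w.
Definition linv (a : letter) : letter := (fst a, negb (snd a)).
Definition winv (w : word) : word := rev (map linv w).
Fixpoint wpow (u : word) (m : nat) : word :=
  match m with O => [] | S m' => u ++ wpow u m' end.
Definition red_push (a : letter) (s : word) : word :=
  match s with
  | b :: s' => if (Nat.eqb (fst a) (fst b) && xorb (snd a) (snd b))%bool then s' else a :: s
  | [] => [a]
  end.
(* free reduction; two words are equal in the free group iff their reductions agree *)
Definition reduce (w : word) : word := fold_right red_push [] w.
Definition free_eq (w v : word) : Prop := reduce w = reduce v.

Definition proper_power (n : nat) (u : word) : Prop :=
  exists v m, wordn n v /\ (2 <= m)%nat /\ free_eq u (wpow v m).

(* products of conjugates of relators (and their inverses) in F_n *)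
Inductive nclF (n : nat) (R : list word) : word -> Prop :=
| nclF_nil : nclF n R []
| nclF_cons c r (eps : bool) w :
    wordn n c -> In r R -> nclF n R w ->
    nclF n R (c ++ (if eps then r else winv r) ++ winv c ++ w).

Definition in_nclF (n : nat) (R : list word) (w : word) : Prop :=
  exists v, nclF n R v /\ free_eq v w.

Definition eval_letter (K : Group) (x : nat -> K) (a : letter) : K :=
  if snd a then x (fst a) else ginv (x (fst a)).
Definition evalw (K : Group) (x : nat -> K) (w : word) : K :=
  fold_right (fun a acc => gop (eval_letter K x a) acc) (gid K) w.

(* A finite presentation <x_1..x_n | u_1^m_1, ..., u_s^m_s> of K, with the
   u_i not proper powers in F_n, together with the canonical epimorphism
   phi : F_n -> K (x_i |-> pr_x i) whose kernel is the normal closure of R. *)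
Record presentation (K : Group) := {
  pr_n : nat;
  pr_x : nat -> K;
  pr_rels : list (word * nat);
  pr_rels_ok : Forall (fun p => wordn pr_n (fst p) /\ ~ proper_power pr_n (fst p)
                                /\ (1 <= snd p)%nat) pr_rels;
  pr_rels_nodup : NoDup (map (fun p => reduce (wpow (fst p) (snd p))) pr_rels);
  pr_gen : forall g : K, exists w, wordn pr_n w /\ geq (evalw K pr_x w) g;
  pr_ker : forall w, wordn pr_n w ->
     (geq (evalw K pr_x w) (gid K) <->
      in_nclF pr_n (map (fun p => wpow (fst p) (snd p)) pr_rels) w) }.

Definition finitely_presented (K : Group) : Prop := inhabited (presentation K).

Definition RK (K : Group) (g : K) : Prop := forall H, finite_index K H -> H g.

(* k is the order of g R_K in K / R_K *)
Definition is_RK_order (K : Group) (g : K) (k : nat) : Prop :=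
  (1 <= k)%nat /\ RK K (gpow g k) /\ forall j, (1 <= j < k)%nat -> ~ RK K (gpow g j).

(* 1/k, with 1/infinity = 0 *)
Definition recip_order (K : Group) (g : K) : R :=
  match excluded_middle_informative (exists k, is_RK_order K g k) with
  | left H => / INR (proj1_sig (constructive_indefinite_description _ H))
  | right _ => 0
  end.

Definition rdefQ (K : Group) (Q : presentation K) : R :=
  INR (pr_n K Q) -
  fold_right Rplus 0 (map (fun p => recip_order K (evalw K (pr_x K Q) (fst p))) (pr_rels K Q)).

Definition rdef (K : Group) : Rbar :=
  Lub_Rbar (fun r => exists Q : presentation K, r = rdefQ K Q).

(* Main.v *)
Require Import Defs.
From Stdlib Require Import Reals List.
From Coquelicot Require Import Rbar.
From Stdlib Require Import Arith Lia ZArith Bool ClassicalEpsilon Classical Lra.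
From Coquelicot Require Import Lub.
Import ListNotations.

Definition cancels (a b : letter) : bool := (Nat.eqb (fst a) (fst b) && xorb (snd a) (snd b))%bool.

Lemma cancels_linv a b : cancels a b = true <-> b = linv a.
Proof. destruct a as [i s], b as [j t]; unfold cancels, linv; simpl.
  split.
  - intro H. apply andb_true_iff in H as [H1 H2]. apply Nat.eqb_eq in H1. subst.
    destruct s,t; simpl in *; congruence.
  - intro H; inversion H; subst. rewrite Nat.eqb_refl; destruct s; reflexivity. Qed.

Lemma linv_linv a : linv (linv a) = a.
Proof. destruct a as [i []]; reflexivity. Qed.

Lemma cancels_linv_self a : cancels (linv a) a = true.
Proof. apply cancels_linv. now rewrite linv_linv. Qed.

Lemma rp_cons a b s : red_push a (b :: s) = if cancels a b then s else a :: b :: s.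
Proof. reflexivity. Qed.
Lemma rp_nil a : red_push a [] = [a].
Proof. reflexivity. Qed.

Inductive reduced : word -> Prop :=
| r_nil : reduced []
| r_one a : reduced [a]
| r_cons a b s : cancels a b = false -> reduced (b :: s) -> reduced (a :: b :: s).

Lemma reduced_tail a s : reduced (a :: s) -> reduced s.
Proof. intro H; inversion H; subst; auto; constructor. Qed.

Lemma red_push_reduced a s : reduced s -> reduced (red_push a s).
Proof.
  intro H. destruct s as [|b s]; simpl. constructor.
  fold (cancels a b). destruct (cancels a b) eqn:E.
  - eapply reduced_tail; eauto.
  - constructor; auto.
Qed.

Lemma reduce_reduced w : reduced (reduce w).
Proof. induction w; simpl. constructor. apply red_push_reduced; auto. Qed.

Lemma red_push_cancel a s : reduced s -> red_push (linv a) (red_push a s) = s.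
Proof.
  intro H. destruct s as [|b s].
  - rewrite rp_nil, rp_cons, cancels_linv_self. reflexivity.
  - rewrite rp_cons. destruct (cancels a b) eqn:E.
    + apply cancels_linv in E. subst b. destruct s as [|c s]. reflexivity.
      rewrite rp_cons. inversion H; subst. rewrite H2. reflexivity.
    + rewrite rp_cons, cancels_linv_self. reflexivity.
Qed.

Lemma red_push_cancel' a s : reduced s -> red_push a (red_push (linv a) s) = s.
Proof. intro H. rewrite <- (linv_linv a) at 1. now apply red_push_cancel. Qed.

Definition Pw (w s : word) : word := fold_right red_push s w.

Lemma reduce_app a b : reduce (a ++ b) = Pw a (reduce b).
Proof. unfold reduce, Pw. apply fold_right_app. Qed.

Lemma Pw_reduced w s : reduced s -> reduced (Pw w s).
Proof. induction w; simpl; auto. intro; apply red_push_reduced; auto. Qed.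

Lemma Pw_red_push x t s : reduced t -> reduced s -> Pw (red_push x t) s = red_push x (Pw t s).
Proof.
  intros Ht Hs. destruct t as [|b t]. reflexivity.
  rewrite rp_cons. destruct (cancels x b) eqn:E.
  - apply cancels_linv in E. subst b.
    change (Pw (linv x :: t) s) with (red_push (linv x) (Pw t s)).
    rewrite red_push_cancel'. reflexivity.
    apply Pw_reduced; auto; eapply reduced_tail; eauto.
  - reflexivity.
Qed.

Lemma Pw_reduce w s : reduced s -> Pw (reduce w) s = Pw w s.
Proof.
  intro Hs. induction w; simpl. reflexivity.
  rewrite Pw_red_push; auto. now rewrite IHw. apply reduce_reduced.
Qed.

Lemma reduced_fix s : reduced s -> reduce s = s.
Proof.
  induction 1; simpl. reflexivity. reflexivity.
  simpl in IHreduced. rewrite IHreduced. simpl. fold (cancels a b). now rewrite H.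
Qed.

Lemma reduce_idem w : reduce (reduce w) = reduce w.
Proof. apply reduced_fix, reduce_reduced. Qed.

Lemma reduce_app2 a b : reduce (a ++ b) = reduce (reduce a ++ reduce b).
Proof.
  rewrite !reduce_app, reduce_idem, Pw_reduce; auto. apply reduce_reduced.
Qed.

Lemma free_eq_app a a' b b' : free_eq a a' -> free_eq b b' -> free_eq (a ++ b) (a' ++ b').
Proof. unfold free_eq; intros H1 H2. rewrite reduce_app2, H1, H2, <- reduce_app2. reflexivity. Qed.

Lemma free_eq_refl a : free_eq a a. Proof. reflexivity. Qed.
Lemma free_eq_sym a b : free_eq a b -> free_eq b a. Proof. unfold free_eq; auto. Qed.
Lemma free_eq_trans a b c : free_eq a b -> free_eq b c -> free_eq a c.
Proof. unfold free_eq; congruence. Qed.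

Lemma winv_app a b : winv (a ++ b) = winv b ++ winv a.
Proof. unfold winv. rewrite map_app, rev_app_distr. reflexivity. Qed.

Lemma winv_cons a w : winv (a :: w) = winv w ++ [linv a].
Proof. reflexivity. Qed.

Lemma winv_winv w : winv (winv w) = w.
Proof. unfold winv. rewrite map_rev, rev_involutive, map_map.
  erewrite map_ext. apply map_id. intro; apply linv_linv. Qed.

Lemma winv_nil : winv [] = []. Proof. reflexivity. Qed.

Lemma reduce_w_winv w : reduce (w ++ winv w) = [].
Proof.
  induction w; simpl. reflexivity.
  rewrite winv_cons, app_assoc, reduce_app2, IHw. simpl.
  rewrite Nat.eqb_refl; destruct (snd a); reflexivity.
Qed.

Lemma reduce_winv_w w : reduce (winv w ++ w) = [].
Proof. rewrite <- (winv_winv w) at 2. apply reduce_w_winv. Qed.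

Lemma free_eq_cancel a c b : free_eq (a ++ winv c ++ c ++ b) (a ++ b).
Proof.
  unfold free_eq. rewrite (reduce_app2 a), (reduce_app2 a b). f_equal. f_equal.
  rewrite app_assoc, reduce_app2, reduce_winv_w. simpl. apply reduce_idem.
Qed.

Lemma free_eq_cancel' a c b : free_eq (a ++ c ++ winv c ++ b) (a ++ b).
Proof. rewrite <- (winv_winv c) at 1. apply free_eq_cancel. Qed.

Lemma wordn_app n a b : wordn n a -> wordn n b -> wordn n (a ++ b).
Proof. unfold wordn; intros; apply Forall_app; auto. Qed.
Lemma wordn_winv n a : wordn n a -> wordn n (winv a).
Proof. unfold wordn, winv; intro H. apply Forall_rev. apply Forall_map.
  eapply Forall_impl; [|exact H]. intros [i b]; simpl; auto. Qed.
Lemma wordn_wpow n a m : wordn n a -> wordn n (wpow a m).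
Proof. intro; induction m; simpl. constructor. apply wordn_app; auto. Qed.
Lemma wordn_mono n n' a : (n <= n')%nat -> wordn n a -> wordn n' a.
Proof. unfold wordn; intros; eapply Forall_impl; [|eauto]; simpl; intros; lia. Qed.

Section NCL.
Variables (n : nat) (R : list word).

Lemma nclF_app v1 v2 : nclF n R v1 -> nclF n R v2 -> nclF n R (v1 ++ v2).
Proof.
  induction 1; intro H2; simpl; auto.
  rewrite <- !app_assoc. constructor; auto.
Qed.

Lemma nclF_winv v : nclF n R v -> nclF n R (winv v).
Proof.
  induction 1. constructor.
  rewrite !winv_app, winv_winv.
  rewrite <- !app_assoc.
  apply nclF_app; auto.
  pose proof (nclF_cons n R c r (negb eps) [] H H0 (nclF_nil n R)) as K.
  rewrite app_nil_r in K.
  destruct eps; simpl in *; rewrite ?winv_winv; auto.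
Qed.

Lemma nclF_conj c v : wordn n c -> nclF n R v ->
  exists v', nclF n R v' /\ free_eq v' (c ++ v ++ winv c).
Proof.
  intros Hc. induction 1.
  - exists []. split. constructor. unfold free_eq. simpl. now rewrite reduce_w_winv.
  - destruct IHnclF as [v' [Hv' Hfe]].
    exists ((c ++ c0) ++ (if eps then r else winv r) ++ winv (c ++ c0) ++ v').
    split. constructor; auto. apply wordn_app; auto.
    rewrite winv_app.
    eapply free_eq_trans. apply free_eq_app. apply free_eq_refl. apply free_eq_app. apply free_eq_refl.
    apply free_eq_app. apply free_eq_refl. exact Hfe.
    rewrite <- !app_assoc.
    set (A := c ++ c0 ++ (if eps then r else winv r) ++ winv c0).
    replace (c ++ c0 ++ (if eps then r else winv r) ++ winv c0 ++ winv c ++ c ++ w ++ winv c)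
      with (A ++ winv c ++ c ++ (w ++ winv c)) by (unfold A; now rewrite <- !app_assoc).
    eapply free_eq_trans. apply free_eq_cancel. unfold A. rewrite <- !app_assoc. apply free_eq_refl.
Qed.

Definition I (w : word) := in_nclF n R w.

Lemma I_nil : I [].
Proof. exists []; split. constructor. reflexivity. Qed.

Lemma I_free w w' : free_eq w w' -> I w -> I w'.
Proof. intros H [v [Hv Hf]]. exists v; split; auto. eapply free_eq_trans; eauto. Qed.

Lemma I_app a b : I a -> I b -> I (a ++ b).
Proof. intros [v1 [H1 F1]] [v2 [H2 F2]]. exists (v1 ++ v2); split.
  apply nclF_app; auto. apply free_eq_app; auto. Qed.

Lemma free_eq_winv a b : free_eq a b -> free_eq (winv a) (winv b).
Proof.
  intro H.
  pose proof (free_eq_cancel' (winv a) b []) as E1. rewrite !app_nil_r in E1.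
  pose proof (free_eq_cancel [] a (winv b)) as E2. simpl in E2.
  eapply free_eq_trans. apply free_eq_sym, E1.
  eapply free_eq_trans. 2: apply E2.
  apply free_eq_app. apply free_eq_refl. apply free_eq_app. apply free_eq_sym, H. apply free_eq_refl.
Qed.

Lemma I_winv a : I a -> I (winv a).
Proof. intros [v [H1 F1]]. exists (winv v); split. apply nclF_winv; auto. apply free_eq_winv; auto. Qed.

Lemma I_conj c w : wordn n c -> I w -> I (c ++ w ++ winv c).
Proof.
  intros Hc [v [Hv F]]. destruct (nclF_conj c v Hc Hv) as [v' [H' F']].
  exists v'; split; auto. eapply free_eq_trans; eauto.
  apply free_eq_app. apply free_eq_refl. apply free_eq_app; auto. apply free_eq_refl.
Qed.

Lemma I_rel r : In r R -> I r.
Proof. intro H. pose proof (nclF_cons n R [] r true [] (Forall_nil _) H (nclF_nil n R)) as K.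
  simpl in K. rewrite app_nil_r in K. exists r; split; auto. reflexivity. Qed.
End NCL.

Lemma nclF_mono n n' R R' v : (n <= n')%nat -> incl R R' -> nclF n R v -> nclF n' R' v.
Proof. intros Hn HR. induction 1; constructor; auto. eapply wordn_mono; eauto. Qed.

Lemma I_mono n n' R R' v : (n <= n')%nat -> incl R R' -> I n R v -> I n' R' v.
Proof. intros Hn HR [w [H F]]. exists w; split; auto. eapply nclF_mono; eauto. Qed.


Section Eval.
Variables (K : Group) (x : nat -> K).

Lemma evalw_cons a w : evalw K x (a :: w) = gop (eval_letter K x a) (evalw K x w).
Proof. reflexivity. Qed.

Lemma evalw_app a b : geq (evalw K x (a ++ b)) (gop (evalw K x a) (evalw K x b)).
Proof.
  induction a; simpl. symmetry; apply gop_id_l.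
  rewrite IHa. apply gop_assoc.
Qed.

Lemma eval_linv a : geq (eval_letter K x (linv a)) (ginv (eval_letter K x a)).
Proof. destruct a as [i []]; unfold eval_letter, linv; simpl. reflexivity. symmetry; apply inv_inv. Qed.

Lemma evalw_red_push a s : geq (evalw K x (red_push a s)) (gop (eval_letter K x a) (evalw K x s)).
Proof.
  destruct s as [|b s]. reflexivity.
  rewrite rp_cons. destruct (cancels a b) eqn:E. 2: reflexivity.
  apply cancels_linv in E. subst b. rewrite evalw_cons, eval_linv.
  rewrite cancel2. reflexivity.
Qed.

Lemma evalw_reduce w : geq (evalw K x (reduce w)) (evalw K x w).
Proof. induction w; simpl. reflexivity. rewrite evalw_red_push, IHw. reflexivity. Qed.

Lemma evalw_free_eq a b : free_eq a b -> geq (evalw K x a) (evalw K x b).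
Proof. unfold free_eq; intro H. rewrite <- (evalw_reduce a), <- (evalw_reduce b), H. reflexivity. Qed.

Lemma evalw_winv w : geq (evalw K x (winv w)) (ginv (evalw K x w)).
Proof.
  induction w. simpl. symmetry; apply inv_id.
  rewrite winv_cons, evalw_app, IHw.
  change (evalw K x (a :: w)) with (gop (eval_letter K x a) (evalw K x w)).
  change (evalw K x [linv a]) with (gop (eval_letter K x (linv a)) (gid K)).
  rewrite inv_op, eval_linv, gop_id_r. reflexivity.
Qed.

Lemma evalw_wpow u m : geq (evalw K x (wpow u m)) (gpow (evalw K x u) m).
Proof. induction m; simpl. reflexivity. rewrite evalw_app, IHm. reflexivity. Qed.

Lemma nclF_eval n R v : (forall r, In r R -> geq (evalw K x r) (gid K)) ->
  nclF n R v -> geq (evalw K x v) (gid K).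
Proof.
  intros HR. induction 1. reflexivity.
  assert (Hr : geq (evalw K x (if eps then r else winv r)) (gid K)).
  { destruct eps. apply HR; auto. rewrite evalw_winv, HR; auto. apply inv_id. }
  rewrite !evalw_app, Hr, IHnclF, evalw_winv.
  rewrite (gop_id_r K (ginv _)), (gop_id_l K (ginv _)). apply gop_inv_r.
Qed.

Lemma I_eval n R w : (forall r, In r R -> geq (evalw K x r) (gid K)) ->
  I n R w -> geq (evalw K x w) (gid K).
Proof. intros HR [v [Hv F]]. rewrite <- (evalw_free_eq _ _ F). eapply nclF_eval; eauto. Qed.

Lemma evalw_ext (y : nat -> K) n w : wordn n w -> (forall i, (i < n)%nat -> x i = y i) ->
  evalw K x w = evalw K y w.
Proof.
  intros Hw Hxy. induction Hw; simpl. reflexivity.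
  rewrite IHHw. unfold eval_letter. rewrite Hxy; auto.
Qed.
End Eval.

Definition subst (f : letter -> word) (w : word) : word := flat_map f w.

Lemma subst_app f a b : subst f (a ++ b) = subst f a ++ subst f b.
Proof. unfold subst. apply flat_map_app. Qed.

Lemma subst_cons f a w : subst f (a :: w) = f a ++ subst f w.
Proof. reflexivity. Qed.

Lemma reduce_x_winv_x a b : reduce (a ++ winv a ++ b) = reduce b.
Proof. pose proof (free_eq_cancel' [] a b). simpl in H. exact H. Qed.

Section Subst.
Variable f : letter -> word.
Hypothesis Hf : forall a, f (linv a) = winv (f a).

Lemma subst_red_push a t : reduce (subst f (red_push a t)) = reduce (subst f (a :: t)).
Proof.
  destruct t as [|b t]. reflexivity.
  rewrite rp_cons. destruct (cancels a b) eqn:E. 2: reflexivity.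
  apply cancels_linv in E; subst b. rewrite !subst_cons, Hf. symmetry; apply reduce_x_winv_x.
Qed.

Lemma subst_reduce w : reduce (subst f w) = reduce (subst f (reduce w)).
Proof.
  induction w. reflexivity.
  simpl reduce. rewrite subst_red_push, !subst_cons, !reduce_app, IHw. reflexivity.
Qed.

Lemma subst_free_eq a b : free_eq a b -> free_eq (subst f a) (subst f b).
Proof. unfold free_eq; intro H. rewrite subst_reduce, H, <- subst_reduce. reflexivity. Qed.
End Subst.

Lemma subst_wpow f u m : subst f (wpow u m) = wpow (subst f u) m.
Proof. induction m; simpl. reflexivity. rewrite subst_app, IHm. reflexivity. Qed.

Definition es_letter (j : nat) (a : letter) : Z :=
  if Nat.eqb (fst a) j then (if snd a then 1 else -1)%Z else 0%Z.
Definition es (j : nat) (w : word) : Z := fold_right (fun a acc => (es_letter j a + acc)%Z) 0%Z w.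

Lemma es_app j a b : es j (a ++ b) = (es j a + es j b)%Z.
Proof. induction a; simpl. reflexivity. rewrite IHa; lia. Qed.

Lemma es_linv j a : es_letter j (linv a) = (- es_letter j a)%Z.
Proof. destruct a as [i []]; unfold es_letter, linv; simpl; destruct (i =? j); reflexivity. Qed.

Lemma es_red_push j a s : es j (red_push a s) = (es_letter j a + es j s)%Z.
Proof.
  destruct s as [|b s]. reflexivity.
  rewrite rp_cons. destruct (cancels a b) eqn:E. 2: reflexivity.
  apply cancels_linv in E; subst b. simpl. rewrite es_linv. lia.
Qed.

Lemma es_reduce j w : es j (reduce w) = es j w.
Proof. induction w; simpl. reflexivity. rewrite es_red_push, IHw. reflexivity. Qed.

Lemma es_free_eq j a b : free_eq a b -> es j a = es j b.
Proof. unfold free_eq; intro H. rewrite <- (es_reduce j a), <- (es_reduce j b), H. reflexivity. Qed.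

Lemma es_wpow j u m : es j (wpow u m) = (Z.of_nat m * es j u)%Z.
Proof. induction m. reflexivity. change (wpow u (S m)) with (u ++ wpow u m). rewrite es_app, IHm, Nat2Z.inj_succ. lia. Qed.

Lemma es_wordn j n w : wordn n w -> (n <= j)%nat -> es j w = 0%Z.
Proof. induction 1; simpl; intro. reflexivity. unfold es_letter.
  destruct (Nat.eqb_spec (fst x) j). lia. rewrite IHForall; auto. Qed.

Lemma es_winv j w : es j (winv w) = (- es j w)%Z.
Proof. induction w. reflexivity. rewrite winv_cons, es_app, IHw. change (es j [linv a]) with (es_letter j (linv a) + 0)%Z. change (es j (a :: w)) with (es_letter j a + es j w)%Z. rewrite es_linv. lia. Qed.

Lemma not_pp_es n u j : (es j u = 1 \/ es j u = -1)%Z -> ~ proper_power n u.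
Proof.
  intros Hu [v [m [_ [Hm H]]]]. apply (es_free_eq j) in H. rewrite es_wpow in H.
  assert (Z.of_nat m >= 2)%Z by lia. remember (Z.of_nat m) as M. remember (es j v) as E.
  destruct Hu as [Hu|Hu]; rewrite Hu in H; destruct (Z.lt_trichotomy E 0) as [?|[?|?]]; nia.
Qed.

Definition del (n : nat) (a : letter) : word := if Nat.ltb (fst a) n then [a] else [].

Lemma del_linv n a : del n (linv a) = winv (del n a).
Proof. unfold del, linv; destruct a as [i b]; simpl. destruct (i <? n); reflexivity. Qed.

Lemma subst_del_wordn n w : wordn n w -> subst (del n) w = w.
Proof. induction 1. reflexivity. rewrite subst_cons, IHForall. unfold del.
  apply Nat.ltb_lt in H. rewrite H. reflexivity. Qed.

Lemma wordn_del n w : wordn n (subst (del n) w).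
Proof. induction w. constructor. rewrite subst_cons. apply wordn_app; auto.
  unfold del. destruct (fst a <? n) eqn:E; constructor. apply Nat.ltb_lt; auto. constructor. Qed.

Lemma pp_mono n n' u : wordn n u -> proper_power n' u -> proper_power n u.
Proof.
  intros Hu [v [m [Hv [Hm H]]]]. exists (subst (del n) v), m. split. apply wordn_del. split; auto.
  apply (subst_free_eq (del n) (del_linv n)) in H. rewrite subst_del_wordn in H; auto.
  rewrite subst_wpow in H. exact H.
Qed.


Section GT.
Variable G : Group.
Implicit Types g h x y c d : G.

Lemma gpow_compat g h k : geq g h -> geq (gpow g k) (gpow h k).
Proof. intro E; induction k; simpl. reflexivity. apply gop_compat; auto. Qed.

Lemma gpow_add g a b : geq (gpow g (a + b)) (gop (gpow g a) (gpow g b)).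
Proof. induction a; simpl. symmetry; apply gop_id_l. rewrite IHa. apply gop_assoc. Qed.

Lemma gpow_mul g a b : geq (gpow g (a * b)) (gpow (gpow g a) b).
Proof. induction b. rewrite Nat.mul_0_r. reflexivity.
  rewrite Nat.mul_succ_r, Nat.add_comm, gpow_add, IHb. reflexivity. Qed.

Lemma gpow_gid k : geq (gpow (gid G) k) (gid G).
Proof. induction k; simpl. reflexivity. rewrite IHk. apply gop_id_l. Qed.

Lemma gpow_one g : geq (gpow g 1) g.
Proof. simpl. apply gop_id_r. Qed.

Section SG.
Variable H : G -> Prop.
Hypothesis HH : subgroup G H.
Lemma sg_resp x y : geq x y -> H x -> H y. Proof. destruct HH as [h _]; apply h. Qed.
Lemma sg_id : H (gid G). Proof. destruct HH as [_ [h _]]; apply h. Qed.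
Lemma sg_op x y : H x -> H y -> H (gop x y). Proof. destruct HH as [_ [_ [h _]]]; apply h. Qed.
Lemma sg_inv x : H x -> H (ginv x). Proof. destruct HH as [_ [_ [_ h]]]; apply h. Qed.
Lemma sr y x : H x -> geq x y -> H y. Proof. intros; eapply sg_resp; eauto. Qed.
Lemma sg_inv' x : H (ginv x) -> H x. Proof. intro h. eapply sg_resp. apply inv_inv. apply sg_inv; auto. Qed.
Lemma sg_gpow x k : H x -> H (gpow x k). Proof. intro h; induction k; simpl. apply sg_id. apply sg_op; auto. Qed.
Lemma sg_conj h y : H h -> H y -> H (gop (gop (ginv h) y) h).
Proof. intros; repeat apply sg_op; auto; apply sg_inv; auto. Qed.
Lemma sg_geq_gid x : geq x (gid G) -> H x. Proof. intro E. eapply sg_resp. symmetry; exact E. apply sg_id. Qed.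
End SG.

Lemma fi_sg H : finite_index G H -> subgroup G H. Proof. intros [h _]; exact h. Qed.

Lemma fi_ext P Q : (forall x, P x <-> Q x) -> finite_index G P -> finite_index G Q.
Proof.
  intros E [[h1 [h2 [h3 h4]]] [cs Hcs]]. split. split; [|split; [|split]].
  - intros x y Exy Qx. apply E. apply E in Qx. eauto.
  - apply E; auto.
  - intros x y Qx Qy. apply E. apply E in Qx; apply E in Qy. auto.
  - intros x Qx. apply E. apply E in Qx. auto.
  - exists cs. intro g. destruct (Hcs g) as [c [Hc Hp]]. exists c; split; auto. apply E; auto.
Qed.

Lemma fi_true : finite_index G (fun _ => True).
Proof. split. repeat split. exists [gid G]. intro g. exists (gid G). split; simpl; auto. Qed.

Definition rep2 (H1 H2 : G -> Prop) (p : G * G) : G :=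
  match excluded_middle_informative
     (exists g, H1 (gop (ginv (fst p)) g) /\ H2 (gop (ginv (snd p)) g)) with
  | left e => proj1_sig (constructive_indefinite_description _ e)
  | right _ => gid G
  end.

Lemma coset_change (H : G -> Prop) c d g : subgroup G H ->
  H (gop (ginv c) d) -> H (gop (ginv c) g) -> H (gop (ginv d) g).
Proof.
  intros HH h1 h2. apply (sr _ HH _ _ (sg_op _ HH _ _ (sg_inv _ HH _ h1) h2)).
  rewrite inv_op, inv_inv, assocR, cancel2. reflexivity.
Qed.

Lemma fi_inter H1 H2 : finite_index G H1 -> finite_index G H2 ->
  finite_index G (fun x => H1 x /\ H2 x).
Proof.
  intros [S1 [cs1 C1]] [S2 [cs2 C2]]. split.
  - split; [|split; [|split]].
    + intros x y E [a b]. split; eapply sg_resp; eauto.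
    + split; apply sg_id; auto.
    + intros x y [a b] [c d]; split; apply sg_op; auto.
    + intros x [a b]; split; apply sg_inv; auto.
  - exists (map (rep2 H1 H2) (list_prod cs1 cs2)). intro g.
    destruct (C1 g) as [c1 [I1 K1]]. destruct (C2 g) as [c2 [I2 K2]].
    exists (rep2 H1 H2 (c1, c2)). split. apply in_map, in_prod; auto.
    unfold rep2. destruct excluded_middle_informative as [e|ne].
    + destruct (constructive_indefinite_description _ e) as [d [D1 D2]]. simpl in *.
      split; eapply coset_change; eauto.
    + exfalso; apply ne. exists g; auto.
Qed.

Lemma fi_conj H c : finite_index G H -> finite_index G (fun x => H (gop (gop (ginv c) x) c)).
Proof.
  intros [S [cs C]]. split.
  - split; [|split; [|split]].
    + intros x y E h. apply (sr _ S _ _ h). rewrite E; reflexivity.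
    + apply (sr _ S _ _ (sg_id _ S)). rewrite gop_id_r, gop_inv_l. reflexivity.
    + intros x y hx hy. apply (sr _ S _ _ (sg_op _ S _ _ hx hy)).
      gsimpl. reflexivity.
    + intros x hx. apply (sr _ S _ _ (sg_inv _ S _ hx)). gsimpl. reflexivity.
  - exists (map (fun d => gop (gop c d) (ginv c)) cs). intro g.
    destruct (C (gop (gop (ginv c) g) c)) as [d [Id Kd]].
    exists (gop (gop c d) (ginv c)). split. apply in_map_iff; eauto.
    apply (sr _ S _ _ Kd). gsimpl. reflexivity.
Qed.

Lemma fi_conj_list H l : finite_index G H ->
  finite_index G (fun x => forall c, In c l -> H (gop (gop (ginv c) x) c)).
Proof.
  intro F. induction l.
  - eapply fi_ext. 2: apply fi_true. intro; simpl; split; auto. intros _ c [].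
  - eapply fi_ext. 2: apply (fi_inter _ _ (fi_conj H a F) IHl).
    intro x; simpl; split.
    + intros [h1 h2] c [<-|Hc]; auto.
    + intros h; split; auto.
Qed.

Lemma fi_core H : finite_index G H ->
  exists N, normal_subgroup G N /\ finite_index G N /\ forall x, N x -> H x.
Proof.
  intro F. pose proof F as [S [cs C]].
  exists (fun x => forall c, In c cs -> H (gop (gop (ginv c) x) c)).
  pose proof (fi_conj_list H cs F) as FN.
  split; [split|split].
  - apply fi_sg; auto.
  - intros g x Nx c Ic.
    destruct (C (gop (ginv g) c)) as [c' [Ic' Kc']].
    pose proof (sg_conj _ S _ _ Kc' (Nx c' Ic')) as Hc.
    apply (sr _ S _ _ Hc). gsimpl. reflexivity.
  - auto.
  - intros x Nx. destruct (C (gid G)) as [c0 [I0 K0]].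
    assert (Hc0 : H c0). { apply sg_inv'; auto. apply (sr _ S _ _ K0). apply gop_id_r. }
    pose proof (Nx c0 I0) as h.
    apply (sr _ S _ _ (sg_conj _ S _ _ (sg_inv _ S _ Hc0) h)).
    gsimpl. reflexivity.
Qed.

Lemma NoDup_map_inj_in {A B} (f : A -> B) l :
  (forall a b, In a l -> In b l -> f a = f b -> a = b) -> NoDup l -> NoDup (map f l).
Proof.
  intros Hi Hn. induction Hn; simpl. constructor. constructor.
  - intro Hin. apply in_map_iff in Hin as [y [E Iy]]. assert (y = x) by (apply Hi; simpl; auto). subst; auto.
  - apply IHHn. intros; apply Hi; simpl; auto.
Qed.

Lemma fi_exponent N g : finite_index G N -> exists e, (1 <= e)%nat /\ N (gpow g e).
Proof.
  intros [SN [cs C]].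
  assert (Hf : forall j : nat, { c | In c cs /\ N (gop (ginv c) (gpow g j)) }).
  { intro j. apply constructive_indefinite_description. apply C. }
  set (f := fun j => proj1_sig (Hf j)).
  set (l := seq 0 (S (length cs))).
  assert (~ NoDup (map f l)).
  { intro ND. apply NoDup_incl_length with (l' := cs) in ND.
    rewrite length_map in ND. unfold l in ND. rewrite length_seq in ND. lia.
    intros c Hc. apply in_map_iff in Hc as [j [<- _]]. unfold f. destruct (Hf j); simpl; tauto. }
  assert (Hgen : forall i j, (i < j)%nat -> f i = f j -> exists e, (1 <= e)%nat /\ N (gpow g e)).
  { intros i j Hlt E. exists (j - i)%nat. split. lia.
    unfold f in E. pose proof (proj2_sig (Hf i)) as [_ Ki]. pose proof (proj2_sig (Hf j)) as [_ Kj]. rewrite <- E in Kj.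
    pose proof (coset_change N _ _ _ SN Ki Kj) as K.
    apply (sr _ SN _ _ K).
    replace j with (i + (j - i))%nat at 1 by lia. rewrite gpow_add, cancel1. reflexivity. }
  apply NNPP. intro Hno. apply H. apply NoDup_map_inj_in. 2: apply seq_NoDup.
  intros i j _ _ E. apply NNPP. intro Hij.
  destruct (Nat.lt_gt_cases i j) as [[h|h] _]; try lia; apply Hno.
  - eapply Hgen; eauto.
  - eapply Hgen; eauto.
Qed.

Definition Avoid (P : G -> Prop) := exists H, finite_index G H /\ forall x, P x -> ~ H x.

Lemma Avoid_or P Q : Avoid P -> Avoid Q -> Avoid (fun x => P x \/ Q x).
Proof. intros [H1 [F1 A1]] [H2 [F2 A2]]. exists (fun x => H1 x /\ H2 x). split.
  apply fi_inter; auto. intros x [p|q] [h1 h2]; [eapply A1|eapply A2]; eauto. Qed.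

Lemma Avoid_false : Avoid (fun _ => False).
Proof. exists (fun _ => True); split. apply fi_true. tauto. Qed.

Lemma Avoid_impl P Q : (forall x, P x -> Q x) -> Avoid Q -> Avoid P.
Proof. intros E [H [F A]]. exists H; split; [exact F|]. intros x p; apply A; auto. Qed.

Lemma Avoid_list {A} (l : list A) (Pa : A -> G -> Prop) :
  (forall a, In a l -> Avoid (Pa a)) -> Avoid (fun x => exists a, In a l /\ Pa a x).
Proof.
  induction l; intro Hl.
  - eapply Avoid_impl. 2: apply Avoid_false. intros x [a [[] _]].
  - eapply Avoid_impl. 2: apply (Avoid_or _ _ (Hl a (or_introl eq_refl)) (IHl (fun b Hb => Hl b (or_intror Hb)))).
    intros x [b [[<-|Hb] Hp]]; [left|right]; eauto.
Qed.

Lemma Avoid_pows y K : (forall i, (1 <= i < K)%nat -> exists H, finite_index G H /\ ~ H (gpow y i)) ->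
  Avoid (fun x => exists i, (1 <= i < K)%nat /\ x = gpow y i).
Proof.
  induction K; intro HK.
  - eapply Avoid_impl. 2: apply Avoid_false. intros x [i [Hi _]]; lia.
  - destruct (Nat.eq_dec K 0) as [->|nz].
    + eapply Avoid_impl. 2: apply Avoid_false. intros x [i [Hi _]]; lia.
    + destruct (HK K ltac:(lia)) as [H [F nH]].
      assert (A2 : Avoid (fun x => x = gpow y K)).
      { exists H; split; [exact F|]. intros x ->; exact nH. }
      eapply Avoid_impl. 2: apply (Avoid_or _ _ (IHK (fun i Hi => HK i ltac:(lia))) A2).
      intros x [i [Hi ->]]. destruct (Nat.eq_dec i K) as [->|ne]. right; reflexivity. left; exists i; split; auto; lia.
Qed.

Lemma Avoid_normal P : Avoid P ->
  exists N, normal_subgroup G N /\ finite_index G N /\ forall x, P x -> ~ N x.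
Proof. intros [H [F A]]. destruct (fi_core H F) as [N [NN [FN S]]]. exists N; split; [exact NN|split; [exact FN|]].
  intros x p n. apply (A x p); auto. Qed.

Lemma RK_resp x y : geq x y -> RK G x -> RK G y.
Proof. intros E R H F. eapply sg_resp. apply fi_sg; eauto. eauto. apply R; auto. Qed.

Lemma RK_gid x : geq x (gid G) -> RK G x.
Proof. intros E H F. apply sg_geq_gid; auto. apply fi_sg; auto. Qed.

Lemma is_RK_order_unique g k1 k2 : is_RK_order G g k1 -> is_RK_order G g k2 -> k1 = k2.
Proof. intros [a1 [b1 c1]] [a2 [b2 c2]]. destruct (Nat.lt_total k1 k2) as [h|[h|h]]; auto.
  exfalso; apply (c2 k1); auto. exfalso; apply (c1 k2); auto. Qed.

Lemma recip_eq g k : is_RK_order G g k -> recip_order G g = / INR k.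
Proof.
  intro Hk. unfold recip_order. destruct excluded_middle_informative as [e|ne].
  - destruct (constructive_indefinite_description _ e) as [k' Hk']. simpl.
    now rewrite (is_RK_order_unique _ _ _ Hk Hk').
  - exfalso; eauto.
Qed.

Lemma recip_le g M : (1 <= M)%nat -> (forall j, (1 <= j < M)%nat -> ~ RK G (gpow g j)) ->
  (recip_order G g <= / INR M)%R.
Proof.
  intros HM Hj. unfold recip_order. destruct excluded_middle_informative as [e|ne].
  - destruct (constructive_indefinite_description _ e) as [k [k1 [k2 k3]]]. simpl.
    assert (M <= k)%nat. { destruct (Nat.le_gt_cases M k); auto. exfalso; apply (Hj k); auto. }
    apply Rinv_le_contravar. apply lt_0_INR; lia. apply le_INR; auto.
  - left. apply Rinv_0_lt_compat, lt_0_INR; lia.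
Qed.

Lemma least_nat (P : nat -> Prop) m : P m -> exists k, P k /\ forall j, (j < k)%nat -> ~ P j.
Proof.
  revert P. induction m using (well_founded_induction lt_wf). intros P Pm.
  destruct (classic (exists j, (j < m)%nat /\ P j)) as [[j [Hj Pj]]|N].
  - eapply H; eauto.
  - exists m; split; auto. intros j Hj Pj; apply N; eauto.
Qed.

Lemma RK_order_exists g m : (1 <= m)%nat -> RK G (gpow g m) -> exists k, is_RK_order G g k.
Proof.
  intros Hm R. destruct (least_nat (fun j => (1 <= j)%nat /\ RK G (gpow g j)) m) as [k [[k1 k2] k3]]; auto.
  exists k. split; auto. split; auto. intros j Hj Rj. apply (k3 j). lia. split; auto. lia.
Qed.

Lemma recip_one g : geq g (gid G) -> recip_order G g = 1%R.
Proof.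
  intro E. rewrite (recip_eq g 1). simpl; apply Rinv_1.
  split; auto. split. apply RK_gid. rewrite gpow_one; auto. intros; lia.
Qed.
End GT.

Lemma gpow_quot G S HS g j : @gpow (quotient G S HS) g j = @gpow G g j.
Proof. induction j; simpl. reflexivity. rewrite IHj. reflexivity. Qed.

Lemma fi_quot G S HS N : finite_index G N -> (forall x, S x -> N x) ->
  finite_index (quotient G S HS) N.
Proof.
  intros [[h1 [h2 [h3 h4]]] [cs C]] Inc. split. split; [|split; [|split]]; auto.
  - intros x y E Nx. simpl in E. unfold qeq in E. apply Inc in E.
    eapply h1. 2: apply (h3 _ _ Nx E). apply cancel2.
  - exists cs. exact C.
Qed.

Lemma recip_quot_le G S HS N g M : finite_index G N -> (forall x, S x -> N x) -> (1 <= M)%nat ->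
  (forall j, (1 <= j < M)%nat -> ~ N (gpow g j)) ->
  (recip_order (quotient G S HS) g <= / INR M)%R.
Proof.
  intros F Inc HM Hj. apply recip_le; auto. intros j Hj' R.
  apply (Hj j Hj'). rewrite <- (gpow_quot G S HS). apply R. apply fi_quot; auto.
Qed.

Open Scope nat_scope.

Lemma evalw_quot G S HS y w : evalw (quotient G S HS) y w = evalw G y w.
Proof. induction w; simpl. reflexivity. rewrite IHw. reflexivity. Qed.

Lemma sumR_app l1 l2 : fold_right Rplus 0%R (l1 ++ l2) = (fold_right Rplus 0 l1 + fold_right Rplus 0 l2)%R.
Proof. induction l1; simpl. ring. rewrite IHl1. ring. Qed.

Lemma sumR_le {A} (f g : A -> R) l : (forall a, In a l -> (f a <= g a)%R) ->
  (fold_right Rplus 0%R (map f l) <= fold_right Rplus 0%R (map g l))%R.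
Proof. induction l; simpl; intro h. lra. apply Rplus_le_compat; auto. Qed.

Lemma sumR_const {A} (c : R) (l : list A) : fold_right Rplus 0%R (map (fun _ => c) l) = (INR (length l) * c)%R.
Proof. induction l. simpl. ring. change (length (a :: l)) with (S (length l)). rewrite S_INR. simpl. rewrite IHl. ring. Qed.

Section Construction.
Variables (G : Group) (Q : presentation G) (gs gsI : list G) (k : nat).
Hypothesis HgsI : forall g, In g gsI -> In g gs.
Hypothesis Hfin : forall g, In g gs -> ~ In g gsI -> geq (gpow g k) (gid G).
Hypothesis Hk1 : (1 <= k)%nat.

Let S := Hk G gs k.
Let HS := Hk_normal G gs k.
Let K' := quotient G S HS.
Let n := pr_n G Q.
Let x := pr_x G Q.
Let rels := pr_rels G Q.
Let m := length gsI.
Definition n' := (n + m)%nat.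

Definition wof (g : G) : word := proj1_sig (constructive_indefinite_description _ (pr_gen G Q g)).
Lemma wof_wordn g : wordn n (wof g).
Proof. unfold wof. destruct constructive_indefinite_description as [w [h1 h2]]; auto. Qed.
Lemma wof_eval g : geq (evalw G x (wof g)) g.
Proof. unfold wof. destruct constructive_indefinite_description as [w [h1 h2]]; auto. Qed.

Definition gi (i : nat) : G := nth i gsI (gid G).
Definition x' (i : nat) : G := if Nat.ltb i n then x i else gi (i - n).

Lemma x'_old i : (i < n)%nat -> x' i = x i.
Proof. intro h. unfold x'. apply Nat.ltb_lt in h. now rewrite h. Qed.
Lemma x'_new i : x' (n + i) = gi i.
Proof. unfold x'. replace (n + i <? n) with false. f_equal; lia. symmetry; apply Nat.ltb_ge; lia. Qed.

Lemma eval_old w : wordn n w -> evalw G x' w = evalw G x w.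
Proof. intro h. symmetry. apply (evalw_ext G x x' n w h). intros; symmetry; apply x'_old; auto. Qed.

Definition tieW (i : nat) : word := (n + i, false) :: wof (gi i).
Definition tie (i : nat) : word * nat := (tieW i, 1%nat).
Definition pw (i : nat) : word * nat := ([(n + i, true)], k).
Definition rels' := rels ++ map tie (seq 0 m) ++ map pw (seq 0 m).
Definition Rw (l : list (word * nat)) := map (fun p => wpow (fst p) (snd p)) l.
Definition R' := Rw rels'.
Definition I' := I n' R'.

Lemma gi_in i : (i < m)%nat -> In (gi i) gsI.
Proof. intro; apply nth_In; auto. Qed.

Lemma R'_old r : In r (Rw rels) -> In r R'.
Proof. unfold R', rels', Rw. rewrite map_app. intro; apply in_or_app; auto. Qed.
Lemma R'_tie i : (i < m)%nat -> In (tieW i ++ []) R'.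
Proof. intro h. unfold R', rels', Rw. rewrite !map_app. apply in_or_app; right; apply in_or_app; left.
  rewrite map_map. apply in_map_iff. exists i; split. reflexivity. apply in_seq; lia. Qed.
Lemma R'_pw i : (i < m)%nat -> In (wpow [(n + i, true)] k) R'.
Proof. intro h. unfold R', rels', Rw. rewrite !map_app. apply in_or_app; right; apply in_or_app; right.
  rewrite map_map. apply in_map_iff. exists i; split. reflexivity. apply in_seq; lia. Qed.

Lemma rels_ok p : In p rels -> wordn n (fst p) /\ ~ proper_power n (fst p) /\ (1 <= snd p)%nat.
Proof. intro h. pose proof (pr_rels_ok G Q) as F. rewrite Forall_forall in F. apply F; auto. Qed.

Lemma I_old v : wordn n v -> geq (evalw G x v) (gid G) -> I' v.
Proof.
  intros hv he. apply (pr_ker G Q v hv) in he. eapply I_mono; [| |exact he].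
  unfold n'; lia. intros r hr. apply R'_old. exact hr.
Qed.

Lemma I'_trans v u : I' (v ++ winv u) -> I' u -> I' v.
Proof.
  intros h1 h2. pose proof (I_app _ _ _ _ h1 h2) as h. eapply I_free; [|exact h].
  rewrite <- app_assoc. pose proof (free_eq_cancel v u []) as E. rewrite !app_nil_r in E. exact E.
Qed.

Definition sig (a : letter) : word :=
  if Nat.ltb (fst a) n then [a]
  else if snd a then wof (gi (fst a - n)) else winv (wof (gi (fst a - n))).

Lemma free_eq_c3 A c : free_eq (A ++ c ++ winv c) A.
Proof. pose proof (free_eq_cancel' A c []) as E. rewrite !app_nil_r in E. exact E. Qed.

Lemma I_tie i : i < m -> I' (tieW i).
Proof. intro h. eapply I_free; [|apply I_rel; apply R'_tie; exact h]. rewrite app_nil_r. apply free_eq_refl. Qed.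

Lemma sig_props a : fst a < n' ->
  wordn n (sig a) /\ geq (evalw G x (sig a)) (eval_letter G x' a) /\ I' ([a] ++ winv (sig a)).
Proof.
  destruct a as [j b]; simpl; intro hj. unfold sig; simpl.
  destruct (j <? n) eqn:E.
  - apply Nat.ltb_lt in E. split; [|split].
    + unfold wordn. constructor; [simpl; lia|constructor].
    + simpl. rewrite gop_id_r. unfold eval_letter; simpl. rewrite x'_old; auto. reflexivity.
    + eapply I_free; [|apply I_nil]. pose proof (reduce_w_winv [(j,b)]) as R0. unfold free_eq. simpl in R0 |- *. rewrite R0. reflexivity.
  - apply Nat.ltb_ge in E. set (i := j - n). assert (Hj : j = n + i) by (unfold i; lia).
    assert (hi : i < m) by (unfold n' in hj; lia).
    assert (Hx : x' j = gi i) by (rewrite Hj; apply x'_new).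
    destruct b; split; [| split | | split].
    + apply wof_wordn.
    + unfold eval_letter; simpl. rewrite Hx. apply wof_eval.
    + pose proof (I_winv _ _ _ (I_tie i hi)) as h. unfold tieW in h. rewrite winv_cons in h.
      assert (hc : wordn n' [(j, true)]) by (unfold wordn; constructor; [simpl; auto|constructor]).
      pose proof (I_conj _ _ _ _ hc h) as h2.
      change (linv (n + i, false)) with (n + i, true) in h2. rewrite <- Hj in h2.
      eapply I_free; [|exact h2].
      rewrite <- (app_nil_r ((j, true) :: winv (wof (gi i)))).
      change ((j, true) :: winv (wof (gi i))) with ([(j, true)] ++ winv (wof (gi i))).
      eapply free_eq_trans; [|apply (free_eq_cancel' ([(j, true)] ++ winv (wof (gi i))) [(j, true)] [])].
      rewrite <- !app_assoc. apply free_eq_refl.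
    + apply wordn_winv, wof_wordn.
    + unfold eval_letter; simpl. rewrite evalw_winv, Hx, wof_eval. reflexivity.
    + rewrite winv_winv. pose proof (I_tie i hi) as h. unfold tieW in h. rewrite <- Hj in h. exact h.
Qed.

Lemma sigw w : wordn n' w -> wordn n (subst sig w) /\ geq (evalw G x (subst sig w)) (evalw G x' w).
Proof.
  induction 1. split. constructor. reflexivity.
  destruct IHForall as [h1 h2]. destruct (sig_props x0 H) as [s1 [s2 _]].
  rewrite subst_cons. split. apply wordn_app; auto.
  rewrite evalw_app, s2, h2. reflexivity.
Qed.

Lemma lemA w : wordn n' w -> I' (w ++ winv (subst sig w)).
Proof.
  induction 1. apply I_nil.
  destruct (sig_props x0 H) as [_ [_ s3]].
  assert (hc : wordn n' [x0]) by (unfold wordn; constructor; auto; constructor).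
  pose proof (I_conj _ _ _ _ hc IHForall) as h1.
  pose proof (I_app _ _ _ _ h1 s3) as h2.
  eapply I_free; [|exact h2].
  rewrite subst_cons, winv_app.
  eapply free_eq_trans.
  2: { eapply free_eq_trans. apply (free_eq_cancel ([x0] ++ l ++ winv (subst sig l)) [x0] (winv (sig x0))).
       rewrite <- !app_assoc; apply free_eq_refl. }
  rewrite <- !app_assoc; apply free_eq_refl.
Qed.

Definition Sp (g : G) : Prop := forall v, wordn n v -> geq (evalw G x v) g -> I' v.

Lemma Sp_via v u : wordn n v -> wordn n u -> I' u -> geq (evalw G x v) (evalw G x u) -> I' v.
Proof.
  intros hv hu Iu E. apply (I'_trans v u); auto. apply I_old.
  apply wordn_app; auto. apply wordn_winv; auto.
  rewrite evalw_app, evalw_winv, E. apply gop_inv_r.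
Qed.

Lemma Sp_normal : normal_subgroup G Sp.
Proof.
  split; [split; [|split; [|split]]|].
  - intros a b E h v hv he. apply h; auto. rewrite he, E; reflexivity.
  - intros v hv he. apply I_old; auto.
  - intros a b ha hb v hv he.
    apply (Sp_via v (wof a ++ wof b)); auto. apply wordn_app; apply wof_wordn.
    apply I_app. apply ha. apply wof_wordn. apply wof_eval. apply hb. apply wof_wordn. apply wof_eval.
    rewrite he, evalw_app, !wof_eval. reflexivity.
  - intros a ha v hv he.
    apply (Sp_via v (winv (wof a))); auto. apply wordn_winv, wof_wordn.
    apply I_winv. apply ha. apply wof_wordn. apply wof_eval.
    rewrite he, evalw_winv, wof_eval. reflexivity.
  - intros g a ha v hv he.
    apply (Sp_via v (wof g ++ wof a ++ winv (wof g))); auto.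
    repeat apply wordn_app; try apply wordn_winv; apply wof_wordn.
    apply I_conj. eapply wordn_mono; [|apply wof_wordn]. unfold n'; lia.
    apply ha. apply wof_wordn. apply wof_eval.
    rewrite he, !evalw_app, evalw_winv, !wof_eval. symmetry; apply gop_assoc.
Qed.

Lemma Sp_gen g : In g gs -> Sp (gpow g k).
Proof.
  intros hg v hv he. destruct (classic (In g gsI)) as [hI|nI].
  - destruct (In_nth gsI g (gid G) hI) as [i [hi Ei]].
    set (u := wpow [(n + i, true)] k).
    assert (hu : wordn n' u). { apply wordn_wpow. unfold wordn; constructor; [simpl; unfold n'; lia|constructor]. }
    assert (Iu : I' u) by (apply I_rel, R'_pw; auto).
    pose proof (lemA u hu) as hA. destruct (sigw u hu) as [s1 s2].
    assert (Isu : I' (subst sig u)).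
    { apply (I'_trans _ u); auto. eapply I_free; [|apply I_winv, hA].
      rewrite winv_app, winv_winv. apply free_eq_refl. }
    apply (Sp_via v (subst sig u)); auto.
    rewrite he, s2. unfold u. rewrite evalw_wpow. apply gpow_compat.
    simpl. unfold eval_letter; simpl. rewrite x'_new, gop_id_r. unfold gi. rewrite Ei. reflexivity.
  - apply I_old; auto. rewrite he. apply Hfin; auto.
Qed.

Lemma S_Sp y : S y -> Sp y.
Proof. intro h. apply h. apply Sp_normal. intros s [g [hg ->]]. apply Sp_gen; auto. Qed.

Lemma S_resp a b : geq a b -> S a -> S b.
Proof. apply N_resp, HS. Qed.

Lemma ker' w : wordn n' w ->
  (geq (evalw K' x' w) (gid K') <-> in_nclF n' R' w).
Proof.
  intro hw. unfold K'. rewrite evalw_quot. simpl. unfold qeq. split.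
  - intro h. assert (hS : S (evalw G x' w)).
    { apply (S_resp (ginv (gop (ginv (evalw G x' w)) (gid G)))).
      rewrite gop_id_r, inv_inv. reflexivity. apply N_inv; auto. }
    destruct (sigw w hw) as [s1 s2].
    apply S_Sp in hS. pose proof (hS _ s1 s2) as h2.
    apply (I'_trans w (subst sig w)); auto. apply lemA; auto.
  - intro h. enough (E : geq (evalw K' x' w) (gid K')).
    { unfold K' in E. rewrite evalw_quot in E. exact E. }
    apply (I_eval K' x' n' R' w); auto.
    intros r hr. unfold K'. rewrite evalw_quot. simpl. unfold qeq.
    apply (S_resp (ginv (evalw G x' r))). rewrite gop_id_r; reflexivity. apply N_inv; auto.
    unfold R', rels', Rw in hr. rewrite !map_app in hr.
    apply in_app_or in hr as [hr|hr]; [|apply in_app_or in hr as [hr|hr]];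
      apply in_map_iff in hr as [p [<- hp]].
    + destruct (rels_ok p hp) as [h1 [_ _]].
      apply N_resp with (gid G); auto. symmetry. rewrite eval_old. 2: apply wordn_wpow; auto.
      apply (pr_ker G Q). apply wordn_wpow; auto. apply I_rel. unfold Rw. apply (in_map (fun p => wpow (fst p) (snd p))); exact hp.
      apply N_id; auto.
    + apply in_map_iff in hp as [i [<- hi]]. apply in_seq in hi. simpl.
      apply N_resp with (gid G); auto. 2: apply N_id; auto.
      symmetry. rewrite app_nil_r. unfold eval_letter; simpl.
      rewrite x'_new, eval_old, wof_eval. apply gop_inv_l. apply wof_wordn.
    + apply in_map_iff in hp as [i [<- hi]]. apply in_seq in hi. simpl.
      apply N_resp with (gpow (gi i) k); auto.
      symmetry. rewrite evalw_wpow. apply gpow_compat. simpl. unfold eval_letter; simpl. rewrite x'_new, gop_id_r. reflexivity.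
      intros N HN HG. apply HG. exists (gi i); split; auto. apply HgsI, gi_in; lia.
Qed.

Lemma es_tieW j i : es (n + j) (tieW i) = if Nat.eqb i j then (-1)%Z else 0%Z.
Proof.
  unfold tieW. change (es (n + j) ((n + i, false) :: wof (gi i)))
    with (Z.add (es_letter (n + j) (n + i, false)) (es (n + j) (wof (gi i)))).
  rewrite (es_wordn (n + j) n); [|apply wof_wordn|lia]. unfold es_letter; simpl.
  destruct (Nat.eqb_spec (n + i) (n + j)); destruct (Nat.eqb_spec i j); lia.
Qed.

Lemma es_pwW j i : es (n + j) [(n + i, true)] = if Nat.eqb i j then 1%Z else 0%Z.
Proof.
  change (es (n + j) [(n + i, true)]) with (Z.add (es_letter (n + j) (n + i, true)) 0%Z).
  unfold es_letter; simpl.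
  destruct (Nat.eqb_spec (n + i) (n + j)); destruct (Nat.eqb_spec i j); lia.
Qed.

Lemma rels'_ok : Forall (fun p => wordn n' (fst p) /\ ~ proper_power n' (fst p) /\ (1 <= snd p)) rels'.
Proof.
  unfold rels'. apply Forall_app; split; [|apply Forall_app; split]; apply Forall_forall.
  - intros p hp. destruct (rels_ok p hp) as [h1 [h2 h3]]. split; [|split]; auto.
    eapply wordn_mono; [|exact h1]. unfold n'; lia.
    intro pp. apply h2. eapply pp_mono; eauto.
  - intros p hp. apply in_map_iff in hp as [i [<- hi]]. apply in_seq in hi. simpl.
    split; [|split]; auto.
    + unfold tieW, wordn. constructor. simpl; unfold n'; lia.
      eapply wordn_mono; [|apply wof_wordn]. unfold n'; lia.
    + apply (not_pp_es _ _ (n + i)). rewrite es_tieW, Nat.eqb_refl. auto.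
  - intros p hp. apply in_map_iff in hp as [i [<- hi]]. apply in_seq in hi. simpl.
    split; [|split]; auto.
    + unfold wordn. constructor. simpl; unfold n'; lia. constructor.
    + apply (not_pp_es _ _ (n + i)). rewrite es_pwW, Nat.eqb_refl. auto.
Qed.

Definition key (p : word * nat) : word := reduce (wpow (fst p) (snd p)).

Lemma es_key_old p j : In p rels -> es (n + j) (key p) = 0%Z.
Proof. intro hp. unfold key. rewrite es_reduce. destruct (rels_ok p hp) as [h1 _].
  apply (es_wordn _ n). apply wordn_wpow; auto. lia. Qed.

Lemma es_key_tie i j : es (n + j) (key (tie i)) = if Nat.eqb i j then (-1)%Z else 0%Z.
Proof. unfold key, tie. cbn [fst snd wpow]. rewrite es_reduce, app_nil_r. apply es_tieW. Qed.

Lemma es_key_pw i j : es (n + j) (key (pw i)) = if Nat.eqb i j then Z.of_nat k else 0%Z.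
Proof. unfold key, pw. cbn [fst snd]. rewrite es_reduce, es_wpow, es_pwW.
  destruct (i =? j); lia. Qed.

Lemma NoDup_seq_map (f : nat -> word) : (forall i j, i < m -> j < m -> f i = f j -> i = j) ->
  NoDup (map f (seq 0 m)).
Proof. intro h. apply NoDup_map_inj_in. intros a b ha hb. apply in_seq in ha, hb. apply h; lia.
  apply seq_NoDup. Qed.

Lemma rels'_nodup : NoDup (map key rels').
Proof.
  unfold rels'. rewrite !map_app, !map_map.
  apply NoDup_app; [exact (pr_rels_nodup G Q)| apply NoDup_app |].
  - apply NoDup_seq_map. intros i j hi hj E. apply (f_equal (es (n + i))) in E.
    rewrite !es_key_tie, Nat.eqb_refl in E. destruct (Nat.eqb_spec j i); auto; lia.
  - apply NoDup_seq_map. intros i j hi hj E. apply (f_equal (es (n + i))) in E.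
    rewrite !es_key_pw, Nat.eqb_refl in E. destruct (Nat.eqb_spec j i); auto; lia.
  - intros a ha hb. apply in_map_iff in ha as [i [<- hi]]. apply in_map_iff in hb as [j [E hj]].
    apply (f_equal (es (n + i))) in E. rewrite es_key_tie, es_key_pw, Nat.eqb_refl in E.
    destruct (Nat.eqb_spec j i); lia.
  - intros a ha hb. apply in_map_iff in ha as [p [<- hp]].
    apply in_app_or in hb as [hb|hb]; apply in_map_iff in hb as [j [E hj]];
    apply (f_equal (es (n + j))) in E; cbn beta in E; rewrite (es_key_old p j hp) in E.
    rewrite es_key_tie, Nat.eqb_refl in E; lia.
    rewrite es_key_pw, Nat.eqb_refl in E; lia.
Qed.

Lemma gen' : forall g : K', exists w, wordn n' w /\ geq (evalw K' x' w) g.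
Proof.
  intro g. exists (wof g). split. eapply wordn_mono; [|apply wof_wordn]. unfold n'; lia.
  unfold K'. rewrite evalw_quot. simpl. apply geq_qeq. exact HS. rewrite eval_old. apply wof_eval. apply wof_wordn.
Qed.

Definition Q' : presentation K' :=
  @Build_presentation K' n' (x' : nat -> K') rels' rels'_ok rels'_nodup gen' ker'.

Lemma old_order p : In p rels -> exists kk, is_RK_order G (evalw G x (fst p)) kk.
Proof.
  intro hp. destruct (rels_ok p hp) as [h1 [_ h3]].
  apply (RK_order_exists G _ (snd p)); auto. apply RK_gid.
  rewrite <- evalw_wpow. apply (pr_ker G Q). apply wordn_wpow; auto.
  apply I_rel. apply (in_map (fun p => wpow (fst p) (snd p))); exact hp.
Qed.

Lemma tie_eval i : geq (evalw G x' (tieW i)) (gid G).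
Proof.
  unfold tieW. change (evalw G x' ((n + i, false) :: wof (gi i)))
    with (gop (eval_letter G x' (n + i, false)) (evalw G x' (wof (gi i)))).
  unfold eval_letter; simpl. rewrite x'_new, eval_old, wof_eval. apply gop_inv_l. apply wof_wordn.
Qed.

Lemma rdef_bound (N : G -> Prop) (M : nat) :
  finite_index G N -> (forall y, S y -> N y) -> 1 <= M ->
  (forall p, In p rels -> forall kk, is_RK_order G (evalw G x (fst p)) kk ->
     forall j, 1 <= j < kk -> ~ N (gpow (evalw G x (fst p)) j)) ->
  (forall g, In g gsI -> forall j, 1 <= j < M -> ~ N (gpow g j)) ->
  (rdefQ G Q - INR m * / INR M <= rdefQ K' Q')%R.
Proof.
  intros HN HSN HM Hold Hnew.
  unfold rdefQ. change (pr_n K' Q') with n'. change (pr_rels K' Q') with rels'.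
  change (pr_x K' Q') with x'. change (pr_n G Q) with n. change (pr_rels G Q) with rels.
  change (pr_x G Q) with x.
  unfold rels'. rewrite !map_app, !sumR_app, !map_map.
  assert (A1 : (fold_right Rplus 0 (map (fun p => recip_order K' (evalw K' x' (fst p))) rels)
             <= fold_right Rplus 0 (map (fun p => recip_order G (evalw G x (fst p))) rels))%R).
  { apply sumR_le. intros p hp. destruct (old_order p hp) as [kk hkk].
    destruct (rels_ok p hp) as [h1 _].
    rewrite (recip_eq G _ kk hkk). unfold K'. rewrite evalw_quot, eval_old; auto.
    apply (recip_quot_le G S HS N); auto. destruct hkk; lia. apply (Hold p hp kk hkk). }
  assert (A2 : (fold_right Rplus 0 (map (fun i => recip_order K' (evalw K' x' (fst (tie i)))) (seq 0 m))
             <= fold_right Rplus 0 (map (fun _ => 1%R) (seq 0 m)))%R).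
  { apply sumR_le. intros i hi. right. apply recip_one. unfold K'. rewrite evalw_quot. simpl.
    apply geq_qeq. exact HS. apply tie_eval. }
  assert (A3 : (fold_right Rplus 0 (map (fun i => recip_order K' (evalw K' x' (fst (pw i)))) (seq 0 m))
             <= fold_right Rplus 0 (map (fun _ => / INR M) (seq 0 m)))%R).
  { apply sumR_le. intros i hi. apply in_seq in hi. unfold K'. rewrite evalw_quot. simpl.
    apply (recip_quot_le G S HS N); auto. intros j hj hNj. apply (Hnew (gi i) (gi_in i ltac:(lia)) j hj).
    apply (sr _ N (fi_sg _ _ HN) _ _ hNj). apply gpow_compat. unfold eval_letter; simpl.
    rewrite x'_new. apply gop_id_r. }
  rewrite !sumR_const, length_seq in *. unfold n'. rewrite plus_INR. lra.
Qed.
End Construction.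

Close Scope nat_scope. Open Scope R_scope.

Lemma common_mult (G : Group) (l : list G) (Pp : G -> nat -> Prop) :
  (forall g t c, Pp g t -> Pp g (t * c)%nat) ->
  (forall g, In g l -> exists t, (1 <= t)%nat /\ Pp g t) ->
  exists T, (1 <= T)%nat /\ forall g, In g l -> Pp g T.
Proof.
  intros Hc. induction l; intro Hl.
  - exists 1%nat. split; auto. intros g [].
  - destruct IHl as [T [hT HT]]. intros; apply Hl; simpl; auto.
    destruct (Hl a (or_introl eq_refl)) as [t [ht Ht]].
    exists (t * T)%nat. split. nia. intros g [<-|hg]. apply Hc; auto.
    rewrite Nat.mul_comm. apply Hc; auto.
Qed.

Lemma not_RK_fi (G : Group) y : ~ RK G y -> exists H, finite_index G H /\ ~ H y.
Proof. intro h. apply not_all_ex_not in h as [H h]. exists H. tauto. Qed.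

Theorem mainTheorem18 (G : Group) (gs : list G)
  (Hfp : finitely_presented G) (Hrf : residually_finite G)
  (Hnt : Forall (fun g => ~ geq g (gid G)) gs)
  (Hdef : Rbar_lt (Finite 1) (rdef G)) :
  forall k0 : nat, exists k : nat, (k0 <= k)%nat /\
    Rbar_lt (Finite 1) (rdef (quotient G (Hk G gs k) (Hk_normal G gs k))).
Proof.
  intro k0.
  destruct (classic (exists Q, 1 < rdefQ G Q)) as [[Q hQ]|no].
  2: { exfalso. apply (Rbar_lt_not_le _ _ Hdef). unfold rdef.
       apply (proj2 (Lub_Rbar_correct _)). intros r [Q ->]. simpl.
       apply Rnot_lt_le. intro h; apply no; eauto. }
  set (inf := fun g : G => forall j, (1 <= j)%nat -> ~ geq (gpow g j) (gid G)).
  set (infb := fun g => if excluded_middle_informative (inf g) then true else false).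
  set (gsI := filter infb gs).
  assert (HI : forall g, In g gsI <-> In g gs /\ inf g).
  { intro g. unfold gsI. rewrite filter_In. unfold infb.
    destruct excluded_middle_informative; split; intros [a b]; auto; discriminate. }
  set (m := length gsI).
  set (eps := rdefQ G Q - 1).
  assert (heps : 0 < eps) by (unfold eps; lra).
  assert (hpos : 0 < eps / (INR m + 1)).
  { apply Rdiv_lt_0_compat; auto. pose proof (pos_INR m); lra. }
  destruct (archimed_cor1 _ hpos) as [M [hM1 hM2]].
  assert (Hsmall : INR m * / INR M < eps).
  { assert (0 < / INR M) by (apply Rinv_0_lt_compat, lt_0_INR; lia).
    assert (hm : 0 <= INR m) by apply pos_INR.
    apply Rle_lt_trans with ((INR m + 1) * / INR M). nra.
    apply Rlt_le_trans with ((INR m + 1) * (eps / (INR m + 1))).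
    apply Rmult_lt_compat_l; lra. right; field; lra. }
  set (x := pr_x G Q).
  set (rels := pr_rels G Q).
  set (Pa1 := fun (p : word * nat) y => exists kk j, is_RK_order G (evalw G x (fst p)) kk /\
                 (1 <= j < kk)%nat /\ y = gpow (evalw G x (fst p)) j).
  set (Pa2 := fun (g : G) y => exists j, (1 <= j < M)%nat /\ y = gpow g j).
  assert (AV : Avoid G (fun y => (exists p, In p rels /\ Pa1 p y) \/ (exists g, In g gsI /\ Pa2 g y))).
  { apply Avoid_or; apply Avoid_list.
    - intros p hp. destruct (old_order G Q p hp) as [kk hkk].
      eapply Avoid_impl. 2: apply (Avoid_pows G (evalw G x (fst p)) kk).
      + intros y [kk' [j [h1 [h2 h3]]]]. rewrite (is_RK_order_unique G _ _ _ h1 hkk) in h2. eauto.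
      + intros i hi. apply not_RK_fi. destruct hkk as [_ [_ h]]. apply h; auto.
    - intros g hg. apply Avoid_pows. intros i hi. apply HI in hg as [_ hg].
      apply Hrf. apply hg. lia. }
  destruct (Avoid_normal G _ AV) as [N [NN [FN AN]]].
  set (Pp := fun g t => N (gpow g t) /\ (~ In g gsI -> geq (gpow g t) (gid G))).
  assert (Hcl : forall g t c, Pp g t -> Pp g (t * c)%nat).
  { intros g t c [h1 h2]. split.
    - apply (sr _ N (fi_sg _ _ FN) _ _ (sg_gpow _ _ (fi_sg _ _ FN) _ c h1)). symmetry. apply gpow_mul.
    - intro h. rewrite gpow_mul, gpow_compat. apply gpow_gid. apply h2; auto. }
  destruct (common_mult G gs Pp Hcl) as [T [hT HT]].
  { intros g hg. destruct (classic (In g gsI)) as [hI|nI].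
    - destruct (fi_exponent G N g FN) as [e [he1 he2]]. exists e; split; auto. split; auto. tauto.
    - assert (~ inf g) as ni by (intro hi; apply nI, HI; auto).
      unfold inf in ni. apply not_all_ex_not in ni as [j hj].
      apply imply_to_and in hj as [hj1 hj2]. apply NNPP in hj2.
      exists j. split; auto. split; auto. apply sg_geq_gid; auto. apply fi_sg; auto. }
  set (k := (T * S k0)%nat).
  assert (Hk1 : (1 <= k)%nat) by (unfold k; nia).
  assert (HPk : forall g, In g gs -> Pp g k) by (intros; unfold k; apply Hcl; auto).
  exists k. split. unfold k; nia.
  assert (HgsI : forall g, In g gsI -> In g gs) by (intros g hg; apply HI; auto).
  assert (Hfin : forall g, In g gs -> ~ In g gsI -> geq (gpow g k) (gid G))
    by (intros g hg hn; apply (HPk g hg); auto).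
  assert (HSN : forall y, Hk G gs k y -> N y).
  { intros y hy. apply hy; auto. intros s [g [hg ->]]. apply HPk; auto. }
  assert (hM : (1 <= M)%nat) by lia.
  pose proof (rdef_bound G Q gs gsI k HgsI Hfin Hk1 N M FN HSN hM) as B.
  assert (B' : rdefQ G Q - INR (length gsI) * / INR M <=
               rdefQ _ (Q' G Q gs gsI k HgsI Hfin Hk1)).
  { apply B.
    - intros p hp kk hkk j hj hNj. apply (AN (gpow (evalw G x (fst p)) j)); auto.
      left. exists p. split; auto. exists kk, j. auto.
    - intros g hg j hj hNj. apply (AN (gpow g j)); auto.
      right. exists g. split; auto. exists j; auto. }
  apply Rbar_lt_le_trans with (Finite (rdefQ _ (Q' G Q gs gsI k HgsI Hfin Hk1))).
  - simpl. unfold m, eps in *. lra.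
  - unfold rdef. apply (proj1 (Lub_Rbar_correct _)). eexists; reflexivity.
Qed.
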